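(* Let $M$ be the torus and suppose a $2,\!6$-quadrangulation of $M$ is given, i.e. a map on $M$ all of whose faces are quadrilaterals, in which every vertex has degree $4$ except for exactly two vertices, one of degree $2$ and one of degree $6$. Then the edges of this quadrangulation cannot be colored with two colors such that colors alternate around each face (equivalently, around each vertex).
   Context: A map on a closed connected surface $M$ is an embedding of a finite graph $G$ in $M$ such that every face (connected component of $M\smallsetminus G$) is an open disk. Here a graph is a one-dimensional cell complex, so loops and multiple edges are allowed. A face is a $k$-gon if its boundary walk has $k$ edges (counted with multiplicity). A quadrangulation is a map all of whose faces are quadrilaterals. The degree of a vertex counts edge-ends (a loop contributes $2$). *)

(* Defs.v *)
From mathcomp Require Import all_boot fingroup perm.
Set Implicit Arguments. Unset Strict Implicit. Unset Printing Implicit Defensive.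

(* An oriented map on a finite set of darts T: [sigma] is the rotation at
   vertices (vertices = sigma-orbits), [alpha] is a fixed-point-free involution
   (edges = alpha-orbits), faces are the orbits of [face_perm]. *)
Definition face_perm (T : finType) (sigma alpha : {perm T}) : T -> T :=
  fun d => sigma (alpha d).

Definition is_map (T : finType) (sigma alpha : {perm T}) : Prop :=
  (forall d, alpha (alpha d) = d) /\ (forall d, alpha d != d) /\
  (forall x y : T, connect (fun u v => (v == sigma u) || (v == alpha u)) x y).

Definition n_vertices (T : finType) (sigma alpha : {perm T}) : nat :=
  fcard sigma T.
Definition n_edges (T : finType) (sigma alpha : {perm T}) : nat :=
  fcard alpha T.
Definition n_faces (T : finType) (sigma alpha : {perm T}) : nat :=
  fcard (face_perm sigma alpha) T.

(* An oriented map is on the torus iff its Euler characteristic V - E + F is 0. *)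
Definition on_torus (T : finType) (sigma alpha : {perm T}) : Prop :=
  is_map sigma alpha /\
  n_vertices sigma alpha + n_faces sigma alpha = n_edges sigma alpha.

(* degree of the vertex containing dart d (a loop contributes 2 darts) *)
Definition degree (T : finType) (sigma : {perm T}) (d : T) : nat := fingraph.order sigma d.

Definition face_size (T : finType) (sigma alpha : {perm T}) (d : T) : nat :=
  fingraph.order (face_perm sigma alpha) d.

Definition quadrangulation (T : finType) (sigma alpha : {perm T}) : Prop :=
  forall d, face_size sigma alpha d = 4.

Definition degrees_2_6 (T : finType) (sigma : {perm T}) : Prop :=
  exists x y : T,
    [/\ degree sigma x = 2, degree sigma y = 6 &
        forall z, ~~ fconnect sigma x z -> ~~ fconnect sigma y z ->
                  degree sigma z = 4].

(* 2-colouring of edges (function on darts constant on alpha-orbits) such that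
   consecutive edges along every face boundary walk get different colours *)
Definition alternating_2_colouring (T : finType) (sigma alpha : {perm T})
  (col : T -> bool) : Prop :=
  (forall d, col (alpha d) = col d) /\
  (forall d, col (face_perm sigma alpha d) != col d).

(* Main.v *)
Require Import Defs.
From mathcomp Require Import all_boot fingroup perm.
Set Implicit Arguments. Unset Strict Implicit. Unset Printing Implicit Defensive.
Section Generic.
Variables (T : finType) (f : T -> T).
Hypothesis injf : injective f.

Lemma iter_inj n a b : iter n f a = iter n f b -> a = b.
Proof. by elim: n => //= n IH /injf /IH. Qed.

Lemma iter_ne n x : 0 < n < fingraph.order f x -> iter n f x != x.
Proof.
case/andP=> n0 nlt; apply/eqP=> E.
have := findex_iter nlt; rewrite E findex0 => n0'.
by rewrite -n0' in n0.
Qed.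

Lemma order_le n x : 0 < n -> iter n f x = x -> fingraph.order f x <= n.
Proof.
move=> n0 E; rewrite leqNgt; apply/negP=> lt.
by have := @iter_ne n x; rewrite n0 lt E eqxx => /(_ isT).
Qed.

Lemma fconn_sym x y : fconnect f x y = fconnect f y x.
Proof. exact: fconnect_sym. Qed.

Lemma fconn_trans x y z : fconnect f x y -> fconnect f y z -> fconnect f x z.
Proof. exact: connect_trans. Qed.

Lemma order_conn x y : fconnect f x y -> fingraph.order f y = fingraph.order f x.
Proof.
move=> cxy; rewrite /order; apply: eq_card => z; rewrite /in_mem /=.
apply/idP/idP => H.
  exact: fconn_trans cxy H.
by apply: fconn_trans H; rewrite fconn_sym.
Qed.

Lemma iter_order_conn x y : fconnect f x y -> iter (fingraph.order f x) f y = y.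
Proof. by move=> /order_conn <-; apply: iter_order. Qed.

Lemma conn_iterP x y : fconnect f x y -> exists n, y = iter n f x.
Proof. by move=> /iter_findex <-; eexists. Qed.

Lemma froot_eq x y : fconnect f x y -> froot f x = froot f y.
Proof. by move=> H; apply/(rootP (fconnect_sym injf)). Qed.

Variable tau : T -> T.
Hypothesis injt : injective tau.
Variable x : T.
Hypothesis H : forall y, fconnect f x y -> f (tau (f y)) = tau y.

Lemma reflG t : iter t f (tau (iter t f x)) = tau x.
Proof.
elim: t => // t IH.
by rewrite iterSr iterS H ?fconnect_iter.
Qed.

Lemma refl_order : fingraph.order f (tau x) = fingraph.order f x.
Proof.
apply/eqP; rewrite eqn_leq; apply/andP; split.
  apply: order_le => //; have := reflG (fingraph.order f x).
  by rewrite iter_order.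
apply: order_le => //; have := reflG (fingraph.order f (tau x)).
move=> E.
have E2 : iter (fingraph.order f (tau x)) f (tau (iter (fingraph.order f (tau x)) f x))
   = iter (fingraph.order f (tau x)) f (tau x) by rewrite E iter_order.
by move: (iter_inj E2) => /injt ->.
Qed.

Lemma refl_conn y : fconnect f x y -> fconnect f (tau x) (tau y).
Proof.
move=> /conn_iterP [n ->]; rewrite fconn_sym -(reflG n).
exact: fconnect_iter.
Qed.

Lemma refl_notconn :
  (forall y, fconnect f x y -> tau y != y) ->
  (forall y, fconnect f x y -> f y != tau y) ->
  ~~ fconnect f x (tau x).
Proof.
move=> H1 H2; apply/negP => /conn_iterP [j E].
move: E; have [k [->|->]] : exists k, j = k.*2 \/ j = k.*2.+1.
  by exists j./2; case: (boolP (odd j)) => oj; [right|left];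
     rewrite -{1}(odd_double_half j) ?oj //; move/negbTE: oj => ->.
- move=> E; have := reflG k; rewrite E -addnn iterD => /iter_inj Ek.
  by move: (H1 _ (fconnect_iter f k x)); rewrite Ek eqxx.
- move=> E; have := reflG k; rewrite E -addnn iterS iterD -iterS iterSr => /iter_inj Ek.
  by move: (H2 _ (fconnect_iter f k x)); rewrite Ek eqxx.
Qed.
End Generic.
Lemma even_invol (T : finType) (g : T -> T) : forall (R : pred T),
  (forall r, R r -> R (g r)) -> (forall r, R r -> g (g r) = r) ->
  (forall r, R r -> g r != r) -> ~~ odd #|R|.
Proof.
move=> R; move: {2}#|R| (leqnn #|R|) => n; elim: n R => [|n IH] R.
  by rewrite leqn0 => /eqP ->.
move=> cR H1 H2 H3.
case: (pickP R) => [r Rr | R0]; last by rewrite (eq_card0 R0).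
pose R' := [pred z | R z && (z != r) && (z != g r)].
have cardR : #|R| = #|R'|.+2.
  have Rr' : r \in R := Rr. have Rg : (g r \in [predD1 R & r]).
    by rewrite !inE (H3 _ Rr); apply: H1.
  rewrite (cardD1 r) Rr' (cardD1 (g r)) Rg add1n add1n.
  congr (_.+2); apply: eq_card => z; rewrite !inE.
  have -> : (z \in R) = R z by [].
  by case: (z == g r); case: (z == r); case: (R z).
rewrite cardR /= negbK.
have : ~~ odd #|R'|.
  apply: IH.
  - by move: cR; rewrite cardR ltnS => /ltnW.
  - move=> z /andP [/andP [Rz zr] zg]; rewrite /= (H1 _ Rz) /=.
    apply/andP; split; apply/eqP => E.
      by move: zg; rewrite -E (H2 _ Rz) eqxx.
    by move: zr; rewrite -(H2 _ Rz) E (H2 _ Rr) eqxx.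
  - by move=> z /andP [/andP [Rz _] _]; apply: H2.
  - by move=> z /andP [/andP [Rz _] _]; apply: H3.
by [].
Qed.

Lemma even_roots (T : finType) (f : T -> T) (injf : injective f) (A : pred T) (tau : T -> T) :
 (forall x y, fconnect f x y -> A x -> A y) ->
 (forall x, A x -> A (tau x)) ->
 (forall x, A x -> tau (tau x) = x) ->
 (forall x, A x -> ~~ fconnect f x (tau x)) ->
 (forall x y, A x -> fconnect f x y -> fconnect f (tau x) (tau y)) ->
 ~~ odd #|[pred r | A r && (froot f r == r)]|.
Proof.
move=> HA Ht Htt Hn Hc.
apply: (@even_invol _ (fun r => froot f (tau r))).
- move=> r /andP [Ar _]; apply/andP; split; last by rewrite (root_root (fconnect_sym injf)).
  exact: (HA _ _ (connect_root _ (tau r)) (Ht _ Ar)).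
- move=> r /andP [Ar /eqP rr] /=.
  have c1 : fconnect f (tau r) (froot f (tau r)) by apply: connect_root.
  have := Hc _ _ (Ht _ Ar) c1; rewrite Htt // => c2.
  by rewrite -(froot_eq injf c2) rr.
- move=> r /andP [Ar /eqP rr] /=; apply/eqP => E.
  move: (Hn _ Ar); rewrite fconn_sym //.
  have c1 : fconnect f (tau r) (froot f (tau r)) by apply: connect_root.
  by rewrite E in c1; rewrite c1.
Qed.

Section Main.
Variables (T : finType) (sigma alpha : {perm T}) (col : T -> bool) (x0 y0 : T).
Hypothesis aa : forall d, alpha (alpha d) = d.
Hypothesis af : forall d, alpha d != d.
Hypothesis quad : forall d, fingraph.order (face_perm sigma alpha) d = 4.
Hypothesis ordx : fingraph.order sigma x0 = 2.
Hypothesis ordy : fingraph.order sigma y0 = 6.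
Hypothesis ord4 : forall z, ~~ fconnect sigma x0 z -> ~~ fconnect sigma y0 z ->
  fingraph.order sigma z = 4.
Hypothesis cola : forall d, col (alpha d) = col d.
Hypothesis colf : forall d, col (face_perm sigma alpha d) != col d.

Definition phi d := sigma (alpha d).
Definition psi d := sigma (sigma (alpha d)).
Definition chi d := phi (phi d).
Definition p := if col x0 then x0 else sigma x0.
Definition q0 := if col y0 then y0 else sigma y0.
Definition q k := iter k.*2 sigma q0.
Definition a k := alpha (q k).
Definition bad y := [|| fconnect psi y (q 0), fconnect psi y (q 1) | fconnect psi y (q 2)].

Lemma injs : injective sigma. Proof. exact: perm_inj. Qed.
Lemma inja : injective alpha. Proof. exact: perm_inj. Qed.
Lemma injphi : injective phi. Proof. by move=> u v /injs /inja. Qed.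
Lemma injpsi : injective psi. Proof. by move=> u v /injs /injs /inja. Qed.
Lemma injchi : injective chi. Proof. by move=> u v /injphi /injphi. Qed.

Lemma cols e : col (sigma e) = ~~ col e.
Proof.
have := colf (alpha e); rewrite /face_perm aa cola.
by case: (col (sigma e)); case: (col e).
Qed.

Lemma colpsi d : col (psi d) = col d.
Proof. rewrite /psi !cols cola. exact: negbK. Qed.

Lemma colchi d : col (chi d) = col d.
Proof. by rewrite /chi /phi cols cola cols cola negbK. Qed.

Lemma col_conn d e : fconnect psi d e -> col e = col d.
Proof.
move=> /conn_iterP [n ->]; elim: n => //= n IH; by rewrite colpsi.
Qed.

Lemma coliter k z : col (iter k sigma z) = odd k (+) col z.
Proof. elim: k => //= k IH; rewrite cols IH; by case: (odd k); case: (col z). Qed.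

Lemma phi4 d : phi (phi (phi (phi d))) = d.
Proof. by have := fingraph.iter_order (f:=face_perm sigma alpha) injphi d; rewrite quad. Qed.

Lemma phi2 d : phi (phi d) != d.
Proof.
by have := @iter_ne _ (face_perm sigma alpha) 2 d; rewrite quad; apply.
Qed.

Lemma conn_x0_p : fconnect sigma x0 p.
Proof. rewrite /p; case: (col x0); [exact: connect0 | exact: fconnect1]. Qed.

Lemma colp : col p.
Proof. rewrite /p; case E: (col x0) => //; by rewrite cols E. Qed.

Lemma sig2p : sigma (sigma p) = p.
Proof.
have := fingraph.iter_order injs p; rewrite (order_conn injs conn_x0_p) ordx. by [].
Qed.

Lemma conn_y0_q0 : fconnect sigma y0 q0.
Proof. rewrite /q0; case: (col y0); [exact: connect0 | exact: fconnect1]. Qed.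

Lemma colq k : col (q k).
Proof.
rewrite /q coliter odd_double /= /q0; case E: (col y0) => //; by rewrite cols E.
Qed.

Lemma q6 : iter 6 sigma q0 = q0.
Proof.
have := fingraph.iter_order injs q0; by rewrite (order_conn injs conn_y0_q0) ordy.
Qed.

Lemma qS k : q k.+1 = sigma (sigma (q k)).
Proof. by rewrite /q doubleS. Qed.

Lemma q3 : q 3 = q 0.
Proof. exact: q6. Qed.

Lemma psia k : psi (a k) = q k.+1.
Proof. by rewrite /psi /a aa qS. Qed.

Lemma q_neq : [/\ q 0 != q 1, q 1 != q 2 & q 0 != q 2].
Proof.
have o : fingraph.order sigma q0 = 6 by rewrite (order_conn injs conn_y0_q0) ordy.
have n2 := @iter_ne _ sigma 2 q0; have n4 := @iter_ne _ sigma 4 q0.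
rewrite o in n2 n4.
split; rewrite eq_sym.
- exact: n2.
- apply/negP => /eqP E.
  have E' : iter 2 sigma (iter 2 sigma q0) = iter 2 sigma q0 by exact: E.
  by move: n2; rewrite (iter_inj injs E') eqxx => /(_ isT).
- exact: n4.
Qed.

Definition isQ z := [|| z == q 0, z == q 1 | z == q 2].
Definition isA z := [|| z == a 0, z == a 1 | z == a 2].

Lemma Qchar z : col z -> fconnect sigma y0 z -> isQ z.
Proof.
move=> cz c; have hk := findex_max c; rewrite ordy in hk.
rewrite -(iter_findex c) in cz *; move: (findex _ _ _) hk cz => k hk.
rewrite coliter /isQ /q /q0; case: (col y0) => /=;
case: k hk => [|[|[|[|[|[|k]]]]]] hk //= _; by rewrite ?eqxx ?orbT.
Qed.

Lemma ord_gen z : fconnect sigma x0 z \/ fconnect sigma y0 z \/ fingraph.order sigma z = 4.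
Proof.
case: (boolP (fconnect sigma x0 z)) => h1; first by left.
case: (boolP (fconnect sigma y0 z)) => h2; first by right; left.
by right; right; apply: ord4.
Qed.

Lemma pchar z : col z -> sigma (sigma z) = z -> z = p.
Proof.
move=> cz E; have hle : fingraph.order sigma z <= 2 by apply: order_le.
case: (ord_gen z) => [c|[c|c]].
- have hk := findex_max c; rewrite ordx in hk.
  rewrite -(iter_findex c) in cz *; move: (findex _ _ _) hk cz => k hk.
  rewrite coliter /p; case: (col x0) => /=; case: k hk => [|[|k]] hk //=.
- by rewrite (order_conn injs c) ordy in hle.
- by rewrite c in hle.
Qed.

Lemma sig4 z : col z -> ~~ isQ z -> iter 4 sigma z = z.
Proof.
move=> cz nq; case: (ord_gen z) => [c|[c|c]].
- have := fingraph.iter_order injs z; rewrite (order_conn injs c) ordx /= => E.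
  by rewrite E E.
- by rewrite (Qchar cz c) in nq.
- by have := fingraph.iter_order injs z; rewrite c.
Qed.

Lemma isA_psi z : isA z -> isQ (psi z).
Proof.
by rewrite /isA /isQ => /or3P [] /eqP ->; rewrite psia ?q3 eqxx ?orbT.
Qed.

Lemma psi_isQ z : col z -> isQ (psi z) -> isA z.
Proof.
move=> cz; rewrite /isQ /isA -q3 -(psia 0) -(psia 1) -(psia 2).
by rewrite !(inj_eq injpsi) => /or3P [] ->; rewrite ?orbT.
Qed.

Lemma reflA z : col z -> ~~ isA z -> psi (alpha (psi z)) = alpha z.
Proof.
move=> cz nA; have : iter 4 sigma (alpha z) = alpha z.
  apply: sig4; first by rewrite cola.
  apply: contra nA; rewrite /isQ /isA /a => /or3P [] /eqP <-; by rewrite aa eqxx ?orbT.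
by rewrite /psi aa.
Qed.

Lemma bad_conn y z : fconnect psi y z -> bad y = bad z.
Proof.
move=> c; rewrite /bad.
have e w : fconnect psi y w = fconnect psi z w.
  apply/idP/idP => h; first by apply: (connect_trans _ h); rewrite fconn_sym //; exact: injpsi.
  exact: connect_trans c h.
by rewrite !e.
Qed.

Lemma isQ_bad z : isQ z -> bad z.
Proof. by rewrite /isQ /bad => /or3P [] /eqP ->; rewrite connect0 ?orbT. Qed.

Lemma good_notA y : ~~ bad y -> ~~ isA y.
Proof.
move=> nb; apply/negP => /isA_psi /isQ_bad; rewrite -(bad_conn (fconnect1 psi y)).
by rewrite (negbTE nb).
Qed.

Lemma good_refl y : col y -> ~~ bad y -> psi (alpha (psi y)) = alpha y.
Proof. by move=> cy nb; apply: reflA => //; apply: good_notA. Qed.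

Lemma psi_ap : psi (alpha p) = p.
Proof. by rewrite /psi aa sig2p. Qed.

Lemma bad_p : bad p.
Proof.
apply/negPn/negP => nb.
have H : forall y, fconnect psi p y -> psi (alpha (psi y)) = alpha y.
  move=> y c; apply: good_refl.
    by rewrite (col_conn c) colp.
  by rewrite -(bad_conn c).
have G := reflG H.
set N := fingraph.order psi p.
have hN : alpha p = iter N.-1 psi p.
  apply: injpsi; rewrite psi_ap -iterS orderSpred.
  by rewrite fingraph.iter_order //; exact: injpsi.
have [k [Ek|Ek]] : exists k, N.-1 = k.*2 \/ N.-1 = k.*2.+1.
  by exists N.-1./2; case: (boolP (odd N.-1)) => oj; [right|left];
     rewrite -{1}(odd_double_half N.-1) ?oj //; move/negbTE: oj => ->.
- have := G k; rewrite hN Ek -addnn iterD => /(iter_inj injpsi) E.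
  by move: (af (iter k psi p)); rewrite E eqxx.
- have := G k; rewrite hN Ek -addnn iterS iterD -iterS iterSr => /(iter_inj injpsi) E.
  have cE : col (alpha (iter k psi p)).
    by rewrite cola (col_conn (fconnect_iter _ _ _)) colp.
  have E2 : alpha (iter k psi p) = p.
    by apply: (pchar cE); rewrite {2}E.
  have E3 : iter k psi p = iter k psi (iter k.+1 psi p).
    rewrite -iterD addnS addnn.
    transitivity (alpha (alpha (iter k psi p))); first by rewrite aa.
    by rewrite E2 hN Ek.
  have := iter_inj injpsi E3 => E4.
  have := @iter_ne _ psi k.+1 p; rewrite -E4 eqxx /= => H0; suff: false by []; apply: H0.
  have o : N = k.*2.+2 by rewrite -Ek /N orderSpred.
  by rewrite -/N o -addnn !ltnS leq_addr.
Qed.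

Definition seg i h k := [/\ k < 3, iter h psi (q i) = a k &
  forall s, s < h -> ~~ isA (iter s psi (q i))].

Lemma colqi t i : col (iter t psi (q i)).
Proof. by rewrite (col_conn (fconnect_iter _ _ _)) colq. Qed.

Lemma seg_ex i : i < 3 -> exists h k, seg i h k.
Proof.
move=> hi.
have ex : exists t, isA (iter t psi (q i)).
  exists (fingraph.order psi (q i)).-1.
  have E : psi (iter (fingraph.order psi (q i)).-1 psi (q i)) = q i.
    by rewrite -iterS orderSpred fingraph.iter_order //; exact: injpsi.
  move: E; set Z := iter _ _ _ => E.
  case: i hi Z E => [|[|[|]]] // _ Z E.
  - have E2 : psi Z = psi (a 2) by rewrite E psia q3.
    by rewrite (injpsi E2) /isA eqxx ?orbT.
  - have E2 : psi Z = psi (a 0) by rewrite E psia.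
    by rewrite (injpsi E2) /isA eqxx ?orbT.
  - have E2 : psi Z = psi (a 1) by rewrite E psia.
    by rewrite (injpsi E2) /isA eqxx ?orbT.
case: (ex_minnP ex) => h hA hmin.
have hs : forall s, s < h -> ~~ isA (iter s psi (q i)).
  move=> s sh; apply/negP => As; have := hmin s As; by rewrite leqNgt sh.
exists h; move: hA; rewrite /isA => /or3P [] /eqP E.
- by exists 0.
- by exists 1.
- by exists 2.
Qed.

Lemma seg_Q i h k : seg i h k -> forall t, 0 < t <= h -> ~~ isQ (iter t psi (q i)).
Proof.
case=> _ _ hs [|t] //= th; apply/negP => /(psi_isQ (colqi _ _)).
by apply/negP/hs.
Qed.

Lemma seg_refl i h k : seg i h k -> forall t, t <= h ->
  iter t psi (alpha (iter t psi (q i))) = a i.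
Proof.
case=> _ _ hs; elim => // t IH th.
rewrite iterSr iterS reflA ?colqi ?hs //; apply: IH; exact: ltnW.
Qed.

Lemma seg_sym i h k : i < 3 -> seg i h k -> seg k h i.
Proof.
move=> hi sg; have sg' := sg; case: sg' => hk E hs; split => //.
  by have := seg_refl sg (leqnn h); rewrite E /a aa.
move=> s sh; apply/negP => As.
have ht : 0 < h - s <= h by rewrite subn_gt0 sh leq_subr.
have E1 := seg_refl sg (proj2 (andP ht)).
have E2 : iter (h - s) psi (iter s psi (q k)) = a i.
  rewrite -iterD subnK; last exact: ltnW.
  by have := seg_refl sg (leqnn h); rewrite E /a aa.
rewrite -E1 in E2; have E3 := iter_inj injpsi E2.
move: As; rewrite E3 /isA /a => /or3P [] /eqP /inja => E4;
  by move: (seg_Q sg ht); rewrite E4 /isQ eqxx ?orbT.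
Qed.

Lemma q_inj k k' : k < 3 -> k' < 3 -> q k = q k' -> k = k'.
Proof.
case: q_neq => n01 n12 n02.
case: k => [|[|[|]]] //; case: k' => [|[|[|]]] // _ _ E;
  by move: n01 n12 n02; rewrite E eqxx //= ?andbF.
Qed.

Lemma isA_a k : k < 3 -> isA (a k).
Proof. by case: k => [|[|[|]]] // _; rewrite /isA eqxx ?orbT. Qed.

Lemma seg_uniq i h k h' k' : seg i h k -> seg i h' k' -> h = h' /\ k = k'.
Proof.
move=> [hk E hs] [hk' E' hs'].
have hh : h = h'.
  apply/eqP; rewrite eqn_leq; apply/andP; split; rewrite leqNgt; apply/negP => lt.
  - by move: (hs _ lt); rewrite E' isA_a.
  - by move: (hs' _ lt); rewrite E isA_a.
split => //; subst h'; apply: q_inj => //; apply: inja; rewrite /a in E E'; by rewrite -E -E'.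
Qed.

Lemma seg_next i h k : seg i h k -> iter h.+1 psi (q i) = q k.+1.
Proof. by case=> _ E _; rewrite iterS E psia. Qed.

Lemma case_b f u w hf hu :
  iter hf.+1 psi (q f) = q u -> iter hu.+1 psi (q w) = q w ->
  (forall t, 0 < t <= hf -> ~~ isQ (iter t psi (q f))) ->
  (forall t, 0 < t <= hu -> ~~ isQ (iter t psi (q u))) ->
  isQ (q f) -> q f != q u ->
  fingraph.order psi (q f) != fingraph.order psi (q w).
Proof.
move=> Ef Ew Hf Hu Qf nfu; apply/eqP => Eo.
have hK : fingraph.order psi (q f) <= hu.+1 by rewrite Eo; apply: order_le.
have iK := fingraph.iter_order injpsi (q f).
move: hK iK (fingraph.order_gt0 psi (q f)); set K := fingraph.order _ _ => hK iK K0.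
case: (leqP K hf) => Kf.
  by move: (Hf K); rewrite K0 Kf iK Qf => /(_ isT).
move: Kf; rewrite leq_eqVlt => /orP [/eqP EK|Kf].
  by move: nfu; rewrite -{1}iK -EK Ef eqxx.
have Es : K = (K - hf.+1) + hf.+1 by rewrite subnK // ltnW.
have s0 : 0 < K - hf.+1 <= hu.
  by rewrite subn_gt0 Kf /= leq_subLR (leq_trans hK) // addSn ltnS leq_addl.
by move: (Hu _ s0); rewrite -Ef -iterD -Es iK Qf.
Qed.

Lemma isQ_q k : k < 3 -> isQ (q k).
Proof. by case: k => [|[|[|]]] // _; rewrite /isQ eqxx ?orbT. Qed.

Lemma case_b' f u w hf hu : w < 3 ->
  (forall i, i < 3 -> [\/ i = f, i = u | i = w]) ->
  iter hf.+1 psi (q f) = q u -> iter hu.+1 psi (q w) = q w ->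
  (forall t, 0 < t <= hf -> ~~ isQ (iter t psi (q f))) ->
  (forall t, 0 < t <= hu -> ~~ isQ (iter t psi (q u))) ->
  isQ (q f) -> q f != q u ->
  exists j, j < 3 /\ forall i, i < 3 ->
  fingraph.order psi (q i) = fingraph.order psi (q j) -> fconnect psi (q j) (q i).
Proof.
move=> hw hall Ef Ew Hf Hu Qf nfu; have no := case_b Ef Ew Hf Hu Qf nfu.
exists w; split => // i /hall [->|->|->] Eo.
- by rewrite Eo eqxx in no.
- have cu : fconnect psi (q f) (q u) by rewrite -Ef; apply: fconnect_iter.
  by rewrite -(order_conn injpsi cu) Eo eqxx in no.
- exact: connect0.
Qed.

Lemma bad_struct : exists j, j < 3 /\ forall i, i < 3 ->
  fingraph.order psi (q i) = fingraph.order psi (q j) -> fconnect psi (q j) (q i).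
Proof.
have [h0 [k0 s0]] := seg_ex (isT : 0 < 3).
have [h1 [k1 s1]] := seg_ex (isT : 1 < 3).
have [h2 [k2 s2]] := seg_ex (isT : 2 < 3).
have [n01 n12 n02] := q_neq.
have sy0 := seg_sym (isT : 0 < 3) s0.
have sy1 := seg_sym (isT : 1 < 3) s1.
have sy2 := seg_sym (isT : 2 < 3) s2.
have Q0 := seg_Q s0; have Q1 := seg_Q s1; have Q2 := seg_Q s2.
have N0 := seg_next s0; have N1 := seg_next s1; have N2 := seg_next s2.
have c := fconnect_iter psi.
case: (s0) => hk0 _ _; case: (s1) => hk1 _ _; case: (s2) => hk2 _ _.
move: hk0 hk1 hk2 sy0 sy1 sy2 N0 N1 N2 s0 s1 s2 Q0 Q1 Q2.
case: k0 => [|[|[|//]]] _; case: k1 => [|[|[|//]]] _; case: k2 => [|[|[|//]]] _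
  sy0 sy1 sy2 N0 N1 N2 s0 s1 s2 Q0 Q1 Q2;
  rewrite ?q3 in N0 N1 N2;
  try (by case: (seg_uniq sy0 s1) => _ /eqP);
  try (by case: (seg_uniq sy0 s2) => _ /eqP);
  try (by case: (seg_uniq sy1 s0) => _ /eqP);
  try (by case: (seg_uniq sy1 s2) => _ /eqP);
  try (by case: (seg_uniq sy2 s0) => _ /eqP);
  try (by case: (seg_uniq sy2 s1) => _ /eqP).
- exists 0; split => // i; case: i => [|[|[|]]] // _ _.
  + rewrite -N0; exact: fconnect_iter.
  + rewrite -N1 -N0 -iterD; exact: fconnect_iter.
- case: (seg_uniq sy1 s2) => Eh _; rewrite -Eh in N2.
  apply: (@case_b' 0 1 2 h0 h1) => //.
    by move=> i; case: i => [|[|[|]]] // _; [apply: Or31|apply: Or32|apply: Or33].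
  exact: isQ_q.
- case: (seg_uniq sy0 s1) => Eh _; rewrite -Eh in N1.
  apply: (@case_b' 2 0 1 h2 h0) => //.
    by move=> i; case: i => [|[|[|]]] // _; [apply: Or32|apply: Or33|apply: Or31].
  exact: isQ_q.
  by rewrite eq_sym.
- case: (seg_uniq sy2 s0) => Eh _; rewrite -Eh in N0.
  apply: (@case_b' 1 2 0 h1 h2) => //.
    by move=> i; case: i => [|[|[|]]] // _; [apply: Or33|apply: Or31|apply: Or32].
  exact: isQ_q.
Qed.

Lemma psi_phi y : psi y = phi (alpha (phi y)).
Proof. by rewrite /psi /phi aa. Qed.

Lemma psi_chi_psi y : psi (chi (psi y)) = chi y.
Proof. by rewrite /chi psi_phi (psi_phi y) phi4 aa. Qed.

Lemma psi_ne_chi y : psi y != chi y.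
Proof. by rewrite psi_phi /chi (inj_eq injphi) af. Qed.

Lemma iter_mul z n s : iter n psi z = z -> iter (n * s) psi z = z.
Proof. move=> E; elim: s => [|s IH]; first by rewrite muln0. by rewrite mulnS iterD IH E. Qed.

Section Final.
Variable l : nat.
Definition A1 := [pred d | col d && (fingraph.order psi d == l)].
Definition A2 := [pred d | col d && (fingraph.order psi d == l) && ~~ bad d].

Lemma A1_even : ~~ odd #|[pred r | A1 r && (froot psi r == r)]|.
Proof.
have H : forall x y, fconnect psi x y -> psi (chi (psi y)) = chi y by move=> *; apply: psi_chi_psi.
apply: (even_roots injpsi (tau := chi)).
- move=> x y c /andP [cx ox]; rewrite /A1 /= (col_conn c) cx /=.
  by rewrite (order_conn injpsi c).
- move=> x /andP [cx ox]; rewrite /A1 /= colchi cx /=.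
  by rewrite (refl_order injpsi injchi (H x)).
- by move=> x _; rewrite /chi phi4.
- move=> x _; apply: (refl_notconn injpsi (H x)) => y _; [exact: phi2 | exact: psi_ne_chi].
- move=> x y _; exact: (refl_conn injpsi (H x)).
Qed.

Lemma Hgood x : A2 x -> forall y, fconnect psi x y -> psi (alpha (psi y)) = alpha y.
Proof.
move=> /andP [/andP [cx _] bx] y c; apply: good_refl; first by rewrite (col_conn c).
by rewrite -(bad_conn c).
Qed.

Lemma A2_closed x y : fconnect psi x y -> A2 x -> A2 y.
Proof.
move=> c /andP [/andP [cx ox] bx]; rewrite /A2 /= (col_conn c) cx (order_conn injpsi c) ox.
by rewrite -(bad_conn c).
Qed.

Lemma A2_alpha x : A2 x -> A2 (alpha x).
Proof.
move=> Ax; have H := Hgood Ax.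
have oa := refl_order injpsi inja H.
move: (Ax) => /andP [/andP [cx ox] bx].
rewrite /A2 /= cola cx oa ox /=.
apply/negP => /or3P bq.
have [i [hi ci]] : exists i, i < 3 /\ fconnect psi (alpha x) (q i).
  by case: bq => c; [exists 0 | exists 1 | exists 2].
case: (conn_iterP ci) => s Es.
set N := fingraph.order psi x.
have N0 : 0 < N := fingraph.order_gt0 psi x.
set t := N * s - s.
have G := reflG H t.
have Ax' : A2 (iter t psi x) by apply: (A2_closed (fconnect_iter _ _ _)).
have H' := Hgood Ax'.
have o' := refl_order injpsi inja H'.
have o'' : fingraph.order psi (iter t psi x) = N by exact: (order_conn injpsi (fconnect_iter psi t x)).
have E : alpha (iter t psi x) = q i.
  rewrite Es -G -iterD.
  have -> : s + t = N * s by rewrite /t addnC subnK // leq_pmull.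
  by rewrite iter_mul // -o'' -o' fingraph.iter_order //; exact: injpsi.
have Ea : iter t psi x = a i by rewrite /a -E aa.
move: (good_notA (proj2 (andP Ax'))); rewrite Ea isA_a //.
Qed.

Lemma A2_even : ~~ odd #|[pred r | A2 r && (froot psi r == r)]|.
Proof.
apply: (even_roots injpsi (tau := alpha)).
- exact: A2_closed.
- exact: A2_alpha.
- by move=> x _; rewrite aa.
- move=> x Ax; apply: (refl_notconn injpsi (Hgood Ax)) => y c; first exact: af.
  apply/eqP => E.
  have Ay := A2_closed c Ax; move: (Ay) => /andP [/andP [cy _] bny].
  have cE : col (alpha y) by rewrite cola.
  have E2 : alpha y = p by apply: (pchar cE); rewrite -{2}E.
  have : fconnect psi y p by rewrite -E2 -E; apply: fconnect1.
  by move=> /bad_conn; rewrite bad_p (negbTE bny).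
- move=> x y Ax; exact: (refl_conn injpsi (Hgood Ax)).
Qed.
End Final.

Lemma final : False.
Proof.
have [j [hj Hj]] := bad_struct.
set l := fingraph.order psi (q j).
have e1 := A1_even l; have e2 := A2_even l.
have sym := fconnect_sym injpsi.
set Rb := [pred r | A1 l r && (froot psi r == r) && bad r].
have Rb1 : #|Rb| = 1.
  rewrite -(card1 (froot psi (q j))); apply: eq_card => r; rewrite !inE /=.
  apply/idP/idP.
  - move=> /andP [/andP [/andP [cr /eqP or] /eqP rr] br].
    have [i [hi ci]] : exists i, i < 3 /\ fconnect psi r (q i).
      by case/or3P: br => c; [exists 0 | exists 1 | exists 2].
    have oi : fingraph.order psi (q i) = l by rewrite (order_conn injpsi ci).
    have cji := Hj i hi oi.
    have : fconnect psi r (q j) by apply: connect_trans ci _; rewrite sym.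
    by move=> /(rootP sym) E; rewrite -E rr.
  - move=> /eqP ->.
    have c : fconnect psi (q j) (froot psi (q j)) by apply: connect_root.
    rewrite (root_root sym) eqxx andbT.
    rewrite /= (col_conn c) colq (order_conn injpsi c) eqxx /=.
    rewrite -(bad_conn c) /bad; case: j hj {Hj l Rb e1 e2} c => [|[|[|]]] // _ _;
      by rewrite connect0 ?orbT.
have split : #|[pred r | A1 l r && (froot psi r == r)]| =
   #|[pred r | A2 l r && (froot psi r == r)]| + #|Rb|.
  rewrite -(cardID bad [pred r | A1 l r && (froot psi r == r)]) addnC.
  congr (_ + _); apply: eq_card => r; rewrite !inE /= /in_mem /=;
    by case: (col r); case: (_ == l); case: (froot _ _ == r); case: (bad r).
move: e1; rewrite split Rb1 addn1 /= negbK => o2.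
by rewrite o2 in e2.
Qed.
End Main.

Theorem theorem5 (T : finType) (sigma alpha : {perm T}) :
  on_torus sigma alpha ->
  quadrangulation sigma alpha ->
  degrees_2_6 sigma ->
  ~ (exists col : T -> bool, alternating_2_colouring sigma alpha col).
Proof.
move=> [[aa [af _]] _] quad [x0 [y0 [ox oy o4]]] [col [ca cf]].
exact: (final aa af quad ox oy o4 ca cf).
Qed.
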